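(* $$\mathcal{I}_1\le\frac{4}{n^2}\cdot\frac{\phi_{\max}}{\phi_{\min}}.$$
   Context: Fix a prompt $x$, a countable response space, full-support conditional distributions $\pi_{\mathrm{target}},\pi_{\mathrm{gen}}$, a reward $r$, $\beta>0$, and $n\ge1$. Let $\phi_\beta(y|x)=\frac{\pi_{\mathrm{target}}(y|x)}{\pi_{\mathrm{gen}}(y|x)}e^{\beta r(y|x)}$, $\phi_{\max}=\max_{x,y}\phi_\beta(y|x)$, $\phi_{\min}=\min_{x,y}\phi_\beta(y|x)$, and $\Phi_\beta(s)=\mathbb{E}_{Y\sim\pi_{\mathrm{gen}}(\cdot|x)}[e^{-s\phi_\beta(Y|x)}]$ for $s\ge0$. Let $p_n=\log(n^4)/n$, $\mathcal{R}_1=\{(s_1,s_2)\in[0,\infty)^2:\min\{\Phi_\beta(s_1),\Phi_\beta(s_2)\}\le1-p_n\}$ and $$\mathcal{I}_1=\frac{1}{1-e^{-n}}\int_{\mathcal{R}_1}\big(n^2\Phi_\beta(s_1)\Phi_\beta(s_2)+n\big)\big(-\Phi_\beta'(0)\big)\big(-\Phi_\beta'(s_1+s_2)\big)\exp\big(n[\Phi_\beta(s_1)\Phi_\beta(s_2)-1]\big)\,ds_1\,ds_2.$$ *)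

(* Defs.v *)
From HB Require Import structures.
From mathcomp Require Import all_boot all_order all_algebra.
From mathcomp Require Import all_classical all_reals all_analysis.
Set Implicit Arguments. Unset Strict Implicit. Unset Printing Implicit Defensive.
Import Order.TTheory GRing.Theory Num.Theory.
Import numFieldNormedType.Exports.
Local Open Scope classical_set_scope.
Local Open Scope ring_scope.

Section Defs.
Variables (R : realType) (X : Type) (T : countType).

Definition full_support_distr (pi : X -> T -> R) : Prop :=
  forall x, (forall y, 0 < pi x y) /\ (\esum_(y in [set: T]) (pi x y)%:E = 1)%E.

Definition phib (pt pg r : X -> T -> R) (beta : R) (x : X) (y : T) : R :=
  pt x y / pg x y * expR (beta * r x y).

Definition Phib (pt pg r : X -> T -> R) (beta : R) (x : X) (s : R) : R :=
  fine (\esum_(y in [set: T]) (pg x y * expR (- s * phib pt pg r beta x y))%:E).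

Definition p_n (n : nat) : R := ln ((n%:R) ^+ 4) / n%:R.

Definition region1 (pt pg r : X -> T -> R) (beta : R) (x : X) (n : nat)
  : set (R * R) :=
  [set z | 0 <= z.1 /\ 0 <= z.2 /\
    Num.min (Phib pt pg r beta x z.1) (Phib pt pg r beta x z.2) <= 1 - p_n n].

Definition integrand1 (pt pg r : X -> T -> R) (beta : R) (x : X) (n : nat)
  (z : R * R) : R :=
  let Phi := Phib pt pg r beta x in
  ((n%:R) ^+ 2 * Phi z.1 * Phi z.2 + n%:R) * (- derive1 Phi 0)
  * (- derive1 Phi (z.1 + z.2)) * expR (n%:R * (Phi z.1 * Phi z.2 - 1)).

(* I_1, as an extended real (the integrand is nonnegative) *)
Definition I1 (pt pg r : X -> T -> R) (beta : R) (x : X) (n : nat) : \bar R :=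
  ((1 - expR (- n%:R))^-1)%:E *
  (\int[(@lebesgue_measure R \x @lebesgue_measure R)%E]_(z in region1 pt pg r beta x n)
     (integrand1 pt pg r beta x n z)%:E)%E.

End Defs.

(* Main.v *)
Require Import Defs.
From HB Require Import structures.
From mathcomp Require Import all_boot all_order all_algebra.
From mathcomp Require Import all_classical all_reals all_analysis.
From mathcomp Require Import measurable_realfun.
From mathcomp Require Import ring lra.
Import Order.TTheory GRing.Theory Num.Theory.
Import numFieldNormedType.Exports.
Local Open Scope classical_set_scope.
Local Open Scope ring_scope.
Section Ser.
Variables (R : realType) (T : countType).
Local Open Scope ereal_scope.

Definition ser (a : T -> \bar R) : \bar R :=
  \sum_(k <oo) oapp a 0 (@pickle_inv T k).

Lemma esum_ser (a : T -> \bar R) : (forall t, 0 <= a t) ->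
  \esum_(t in [set: T]) a t = ser a.
Proof.
move=> a0; rewrite /ser nneseries_esumT; last first.
  by move=> k; case: (pickle_inv k) => //= t.
rewrite (_ : \esum_(t in [set: T]) a t = \esum_(t in [set: T]) oapp a 0 (pickle_inv (@pickle T t))); last first.
  by congr esum; apply: funext => t; rewrite pickleK_inv.
have E := esum_image [set: T] (@pickle T) (fun k => oapp a 0 (pickle_inv k)).
rewrite /= in E; rewrite -E; last first.
  by move=> u v _ _ /(congr1 (@pickle_inv T)); rewrite !pickleK_inv => -[].
rewrite [LHS]esum_mkcond; congr esum; apply: funext => k.
case: ifPn => // kI.
case E2: (pickle_inv k) => [t|] //=.
have := @pickle_invK T k; rewrite E2 /= => Ek.
exfalso; move/negP: kI; apply; rewrite inE; by exists t.
Qed.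

Lemma esum_ser' (a : T -> \bar R) : (forall t, 0 <= a t) ->
  \esum_(t in [set: T]) a t = ser a.
Proof. exact: esum_ser. Qed.

End Ser.

Lemma esumZl (R : realType) (T : countType) (c : R) (a : T -> \bar R) :
  0 <= c -> (forall t, (0 <= a t)%E) ->
  (\esum_(t in [set: T]) (c%:E * a t) = c%:E * \esum_(t in [set: T]) a t)%E.
Proof.
move=> c0 a0; rewrite !esum_ser //; last by move=> t; rewrite mule_ge0.
rewrite /ser -nneseriesZl; last by move=> k _; case: (pickle_inv k).
by apply: eq_eseriesr => k _; case: (pickle_inv k) => //=; rewrite mule0.
Qed.

Lemma fin0b (R : realType) (b : R) (e : \bar R) : (0 <= e)%E -> (e <= b%:E)%E ->
  e = (fine e)%:E /\ 0 <= fine e <= b.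
Proof.
move=> e0 e1; have ef : e \is a fin_num.
  by rewrite ge0_fin_numE // (le_lt_trans e1) // ltry.
split; first by rewrite fineK.
by rewrite fine_ge0 //= -lee_fin fineK.
Qed.

Lemma d1cases (R : realType) (f : R -> R) a : derive1 f a = 0 \/ ((fun h => h^-1 *: (f (h + a) - f a)) @ 0^' --> derive1 f a).
Proof. rewrite /derive1 /lim /lim_in; case: xgetP => [y -> P|_]; [by right | by left]. Qed.

Section PhiSec.
Variables (R : realType) (T : countType) (w phi : T -> R) (m M : R).
Hypotheses (w0 : forall t, 0 < w t)
  (wsum : (\esum_(t in [set: T]) (w t)%:E = 1)%E)
  (m0 : 0 < m) (M0 : 0 <= M) (phim : forall t, m <= phi t) (phiM : forall t, phi t <= M).

Let phi0 t : 0 < phi t. Proof. by apply: (lt_le_trans m0). Qed.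

Definition EE s := (\esum_(t in [set: T]) (w t * expR (- s * phi t))%:E)%E.
Definition PP s := fine (EE s).
Definition EK s := (\esum_(t in [set: T]) (w t * phi t * expR (- s * phi t))%:E)%E.
Definition KK s := fine (EK s).

Lemma EE_01 s : 0 <= s -> EE s = (PP s)%:E /\ 0 <= PP s <= 1.
Proof.
move=> s0; apply: (@fin0b R 1); first by apply: esum_ge0 => t _; rewrite lee_fin mulr_ge0 // ?expR_ge0 // ltW.
rewrite -wsum; apply: le_esum => t _; rewrite lee_fin ger_pMr // expR_le1.
by rewrite mulNr oppr_le0 mulr_ge0 // ltW.
Qed.

Lemma EK_M s : 0 <= s -> EK s = (KK s)%:E /\ 0 <= KK s <= M.
Proof.
move=> s0; apply: fin0b.
  by apply: esum_ge0 => t _; rewrite lee_fin mulr_ge0 ?expR_ge0 // mulr_ge0 // ltW.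
apply: (@le_trans _ _ (\esum_(t in [set: T]) (M%:E * (w t)%:E))%E).
  apply: le_esum => t _; rewrite -EFinM lee_fin -mulrA mulrC.
  rewrite ler_pM //; first by rewrite mulr_ge0 // ?expR_ge0 // ltW.
    exact: ltW.
  rewrite -[X in _ <= X]mulr1 ler_pM // ?expR_ge0 ?expR_le1 //; first exact: ltW.
  by rewrite mulNr oppr_le0 mulr_ge0 // ltW.
rewrite esumZl //; first by rewrite wsum mule1.
by move=> t; rewrite lee_fin ltW.
Qed.

Lemma PP_step s h : 0 <= s -> 0 < h ->
  PP (s + h) <= PP s /\ PP s <= PP (s + h) + h * KK s.
Proof.
move=> s0 h0; have sh0 : 0 <= s + h by rewrite addr_ge0 // ltW.
have [E1 _] := EE_01 s s0; have [E2 _] := EE_01 (s + h) sh0; have [E3 _] := EK_M s s0.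
split.
  rewrite -lee_fin -E1 -E2; apply: le_esum => t _; rewrite lee_fin ler_pM2l //.
  by rewrite ler_expR !mulNr lerN2 ler_pM2r // lerDl ltW.
rewrite -lee_fin EFinD EFinM -E1 -E2 -E3 -esumZl //; last first.
  by move=> t; rewrite lee_fin mulr_ge0 ?expR_ge0 // mulr_ge0 // ltW.
  by rewrite ltW.
rewrite -esumD; last 2 first.
  by move=> t _; rewrite lee_fin mulr_ge0 ?expR_ge0 // ltW.
  by move=> t _; rewrite lee_fin mulr_ge0 ?expR_ge0 // ?mulr_ge0 // ltW.
apply: le_esum => t _; rewrite -EFinM -EFinD lee_fin.
rewrite (_ : - (s + h) * phi t = - s * phi t + - h * phi t); last by ring.
rewrite expRD.
have := expR_ge1Dx (- h * phi t).
set A := expR (- s * phi t); set B := expR (- h * phi t) => HB.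
have A0 : 0 < A by apply: expR_gt0.
have : 0 <= w t * A * (B - (1 + - h * phi t)).
  by rewrite mulr_ge0 // ?subr_ge0 // mulr_ge0 // ltW.
move=> H; nra.
Qed.

Lemma deriv_bd s : 0 <= s -> - KK s <= derive1 PP s /\ derive1 PP s <= 0.
Proof.
move=> s0; have [_ /andP[K0 _]] := EK_M s s0.
case: (@d1cases R PP s) => [->|H]; first by rewrite oppr_le0 K0 lexx.
have H' := cvg_dnbhs_at_right H.
pose A := [set y : R | - KK s <= y] `&` [set y : R | y <= 0].
have cA : closed A by apply: closedI; [exact: closed_ge | exact: closed_le].
have Hq : \forall h \near 0^'+, A (h^-1 *: (PP (h + s) - PP s)).
  near=> h.
  have h0 : 0 < h by near: h; exact: nbhs_right_gt.
  have [st1 st2] := PP_step s h s0 h0.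
  have -> : h^-1 *: (PP (h + s) - PP s) = h^-1 * (PP (s + h) - PP s) by rewrite [h + s]addrC.
  split => /=.
    by rewrite ler_pdivlMl //; lra.
  by rewrite pmulr_rle0 ?invr_gt0 // subr_le0.
have := closed_cvg _ cA Hq _ H'.
by case.
Unshelve. all: by end_near.
Qed.

End PhiSec.
Lemma le_int_nm d (T : measurableType d) (R : realType)
  (mu : {measure set T -> \bar R}) (F G : T -> \bar R) :
  (forall x, (0 <= G x)%E) -> (forall x, (F x <= G x)%E) ->
  (\int[mu]_x F x <= \int[mu]_x G x)%E.
Proof.
move=> G0 FG; rewrite [X in (X <= _)%E]integralE.
apply: (@le_trans _ _ (\int[mu]_x F^\+ x)%E).
  rewrite -[leRHS]sube0; apply: leeB => //.
  by apply: integral_ge0 => x _; exact: funeneg_ge0.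
rewrite [leLHS]ge0_integralE; last by move=> x _; exact: funepos_ge0.
rewrite [leRHS]ge0_integralE; last by move=> x _; exact: G0.
rewrite /=.
apply: ge_ereal_sup => _ [h hF <-]; apply: ereal_sup_ubound; exists h => //.
move=> x; apply: le_trans (hF x) _.
rewrite !patch_setT funeposE ge_max; apply/andP; split => //.
Qed.
Lemma int_prod_exp (R : realType) (r c : R) : 0 < r -> 0 <= c ->
  (\int[(@lebesgue_measure R \x @lebesgue_measure R)%E]_z
     (c * (exponential_pdf r z.1 * exponential_pdf r z.2))%:E = c%:E)%E.
Proof.
move=> r0 c0.
have mep := @measurable_exponential_pdf R r.
have ep0 x : 0 <= exponential_pdf r x by apply: exponential_pdf_ge0; exact: ltW.
have f0 (z : R * R) : (0 <= (c * (exponential_pdf r z.1 * exponential_pdf r z.2))%:E)%E.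
  by rewrite lee_fin mulr_ge0 // mulr_ge0.
have mf : measurable_fun [set: R * R] (fun z : R * R => (c * (exponential_pdf r z.1 * exponential_pdf r z.2))%:E).
  apply/measurable_EFinP.
  rewrite (_ : (fun z : R * R => _) = (fun=> c) \* ((exponential_pdf r \o fst) \* (exponential_pdf r \o snd))) //.
  apply: measurable_funM; first exact: measurable_cst.
  apply: measurable_funM; apply: measurableT_comp => //.
rewrite fubini_tonelli1 //; try exact: mf; try exact: f0.
rewrite /fubini_F /=.
transitivity (\int[@lebesgue_measure R]_x (c * exponential_pdf r x)%:E)%E.
  apply: eq_integral => x _.
  under eq_integral do rewrite mulrA EFinM.
  rewrite ge0_integralZl_EFin //.
  all: try (by move=> y _; rewrite lee_fin).
  all: try (by apply/measurable_EFinP).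
  all: try (by rewrite mulr_ge0).
  by rewrite integral_exponential_pdf // mule1.
under eq_integral do rewrite EFinM.
rewrite ge0_integralZl_EFin //.
all: try (by move=> y _; rewrite lee_fin).
all: try (by apply/measurable_EFinP).
by rewrite integral_exponential_pdf // mule1.
Qed.

Lemma meas_prod_exp (R : realType) (r c : R) :
  measurable_fun [set: R * R] (fun z : R * R => (c * (exponential_pdf r z.1 * exponential_pdf r z.2))%:E).
Proof.
apply/measurable_EFinP.
rewrite (_ : (fun z : R * R => _) = (fun=> c) \* ((exponential_pdf r \o fst) \* (exponential_pdf r \o snd))) //.
apply: measurable_funM; first exact: measurable_cst.
by apply: measurable_funM; apply: measurableT_comp => //; exact: measurable_exponential_pdf.
Qed.

Section GSec.
Variables (R : realType) (T : countType) (c phi : T -> R).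
Hypotheses (c0 : forall t, 0 <= c t) (phi0 : forall t, 0 < phi t).

Definition GG (z : R * R) : \bar R :=
  (\sum_(k <oo) oapp (fun t => (c t * (exponential_pdf (phi t) z.1 * exponential_pdf (phi t) z.2))%:E) 0 (@pickle_inv T k))%E.

Lemma GG_ge0 z : (0 <= GG z)%E.
Proof.
apply: nneseries_ge0 => k _; case: (pickle_inv k) => //= t.
by rewrite lee_fin mulr_ge0 // mulr_ge0 // exponential_pdf_ge0 // ltW.
Qed.

Lemma int_GG : (\int[(@lebesgue_measure R \x @lebesgue_measure R)%E]_z GG z = ser R T (fun t => (c t)%:E))%E.
Proof.
rewrite /GG integral_nneseries //.
- apply: eq_eseriesr => k _; case: (pickle_inv k) => [t|] /=.
    exact: int_prod_exp.
  exact: integral0.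
- move=> k; case: (pickle_inv k) => [t|] /=; first exact: meas_prod_exp.
  exact: measurable_cst.
- move=> k z _; case: (pickle_inv k) => //= t.
  by rewrite lee_fin mulr_ge0 // mulr_ge0 // exponential_pdf_ge0 // ltW.
Qed.

End GSec.
Lemma final_bd (R : realType) (nn P1 P2 D0 DS K0 KS M Ex : R) :
  1 <= nn -> 0 <= P1 -> P1 <= 1 -> 0 <= P2 -> P2 <= 1 -> - K0 <= D0 -> D0 <= 0 ->
  - KS <= DS -> DS <= 0 -> K0 <= M -> 0 <= KS -> 0 <= Ex -> Ex <= (nn ^+ 4)^-1 ->
  (nn ^+ 2 * P1 * P2 + nn) * - D0 * - DS * Ex <= 2 * M / nn ^+ 2 * KS.
Proof.
move=> nn1 P1a P1b P2a P2b d0a d0b dSa dSb K0M KS0 E0 E1.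
have nn0 : 0 < nn by lra.
have A1 : nn ^+ 2 * P1 * P2 + nn <= 2 * nn ^+ 2.
  have h1 : P1 * P2 <= 1 by apply: le_trans (ler_piMr P1a P2b) P1b.
  have h2 : nn ^+ 2 * P1 * P2 <= nn ^+ 2.
    by rewrite -mulrA; apply: ler_piMr => //; rewrite exprn_ge0 // ltW.
  have h3 : nn <= nn ^+ 2 by rewrite expr2; apply: ler_peMr => //; exact: ltW.
  lra.
have A0 : 0 <= nn ^+ 2 * P1 * P2 + nn.
  by rewrite addr_ge0 ?mulr_ge0 ?exprn_ge0 // ltW.
have nD0 : 0 <= - D0 by lra.
have nDS : 0 <= - DS by lra.
have nD0M : - D0 <= M by lra.
have nDSK : - DS <= KS by lra.
apply: (@le_trans _ _ (2 * nn ^+ 2 * M * KS * (nn ^+ 4)^-1)).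
  apply: ler_pM => //; first by rewrite !mulr_ge0.
  apply: ler_pM => //; first by rewrite !mulr_ge0.
  exact: ler_pM.
rewrite (_ : 2 * nn ^+ 2 * M * KS * (nn ^+ 4)^-1 = 2 * M / nn ^+ 2 * KS) //.
field; exact: lt0r_neq0.
Qed.

Local Close Scope classical_set_scope.

Theorem lemmaD4 (R : realType) (X : Type) (T : countType)
  (pt pg r : X -> T -> R) (beta : R) (n : nat) (x : X) (phimax phimin : R) :
  full_support_distr pt -> full_support_distr pg ->
  0 < beta -> (1 <= n)%N ->
  (forall x' y, phib pt pg r beta x' y <= phimax) ->
  (exists x' y, phib pt pg r beta x' y = phimax) ->
  (forall x' y, phimin <= phib pt pg r beta x' y) ->
  (exists x' y, phib pt pg r beta x' y = phimin) ->
  (I1 pt pg r beta x n <= (4 / (n%:R) ^+ 2 * (phimax / phimin))%:E)%E.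
Proof.
move=> Hpt Hpg hbeta hn Hmax [x1 [y1 E1]] Hmin [x2 [y2 E2]].
have phib_gt0 x' y : 0 < phib pt pg r beta x' y.
  have [pt0 _] := Hpt x'; have [pg0 _] := Hpg x'.
  by rewrite /phib mulr_gt0 ?expR_gt0 // divr_gt0.
set M := phimax; set m := phimin.
have m0 : 0 < m by rewrite /m -E2.
have M0 : 0 <= M by rewrite /M -E1 ltW.
set w := pg x; set ph := phib pt pg r beta x.
have w0 t : 0 < w t by have [h _] := Hpg x; exact: h.
have wsum : (\esum_(t in [set: T]) (w t)%:E = 1)%E by have [_ h] := Hpg x.
have phim t : m <= ph t by exact: Hmin.
have phiM t : ph t <= M by exact: Hmax.
have ph0 t : 0 < ph t by exact: phib_gt0.
have EPhi : Phib pt pg r beta x = @PP R T w ph by [].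
set nn : R := n%:R.
have nn1 : 1 <= nn by rewrite /nn ler1n.
have nn0 : 0 < nn by lra.
set C : R := 2 * M / nn ^+ 2.
have C0 : 0 <= C by rewrite /C divr_ge0 // ?mulr_ge0 // exprn_ge0 // ltW.
pose c t := C * w t / ph t.
have c0 t : 0 <= c t by apply: divr_ge0; [apply: mulr_ge0 => //; exact: ltW | exact: ltW].
have EE01 := @EE_01 R T w ph m w0 wsum m0 phim.
have EKM := @EK_M R T w ph m M w0 wsum m0 M0 phim phiM.
have DB := @deriv_bd R T w ph m M w0 wsum m0 M0 phim phiM.
have Hpt1 (z : R * R) : ((fun z => (integrand1 pt pg r beta x n z)%:E) \_ (region1 pt pg r beta x n) z <= @GG R T c ph z)%E.
  rewrite patchE; case: ifPn => [zin|_]; last exact: (@GG_ge0 R T c ph c0 ph0).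
  move: zin; rewrite inE => -[z1 [z2 hmin]].
  have S0 : 0 <= z.1 + z.2 by rewrite addr_ge0.
  have [EKS /andP[KS0 KSM]] := EKM _ S0.
  have -> : GG R T c ph z = (C * KK R T w ph (z.1 + z.2))%:E.
    rewrite EFinM -EKS -esumZl //; last first.
      by move=> t; rewrite lee_fin mulr_ge0 ?expR_ge0 // mulr_ge0 // ltW.
    rewrite esum_ser; last first.
      by move=> t; rewrite lee_fin mulr_ge0 // mulr_ge0 ?expR_ge0 // mulr_ge0 // ltW.
    rewrite /GG /ser; apply: eq_eseriesr => k _; case: (pickle_inv k) => //= t.
    rewrite -EFinM; congr EFin.
    rewrite !exponential_pdfE // /c.
    rewrite (_ : - (z.1 + z.2) * ph t = - ph t * z.1 + - ph t * z.2); last by ring.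
    rewrite expRD; field; exact: lt0r_neq0.
  rewrite lee_fin /integrand1 /= EPhi.
  rewrite EPhi in hmin.
  have [E1' /andP[P1a P1b]] := EE01 _ z1.
  have [E2' /andP[P2a P2b]] := EE01 _ z2.
  have [d0a d0b] := DB _ (lexx 0).
  have [dSa dSb] := DB _ S0.
  have [_ /andP[K00 K0M]] := EKM _ (lexx 0).
  move: hmin P1a P1b P2a P2b d0a d0b dSa dSb K00 K0M KS0 KSM.
  set P1 := PP R T w ph z.1; set P2 := PP R T w ph z.2.
  set D0 := derive1 (PP R T w ph) 0; set DS := derive1 (PP R T w ph) (z.1 + z.2).
  set K0 := KK R T w ph 0; set KS := KK R T w ph (z.1 + z.2).
  move=> hmin P1a P1b P2a P2b d0a d0b dSa dSb K00 K0M KS0 KSM.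
  have u1 : P1 * P2 <= 1 - p_n R n.
    move: hmin; rewrite ge_min => /orP[h|h].
      exact: le_trans (ler_piMr P1a P2b) h.
    exact: le_trans (ler_piMl P2a P1b) h.
  have Dexp : expR (nn * (P1 * P2 - 1)) <= (nn ^+ 4)^-1.
    have hp : nn * p_n R n = ln (nn ^+ 4) by rewrite /p_n mulrC divfK // lt0r_neq0.
    have h1 : nn * (P1 * P2 - 1) <= - ln (nn ^+ 4).
      rewrite -hp -mulrN; apply: ler_wpM2l; [exact: ltW | lra].
    apply: (le_trans (_ : _ <= expR (- ln (nn ^+ 4)))); first by rewrite ler_expR.
    by rewrite expRN lnK // posrE exprn_gt0.
  have E0 : 0 <= expR (nn * (P1 * P2 - 1)) by exact: expR_ge0.
  have H := @final_bd R _ _ _ _ _ _ _ _ _ nn1 P1a P1b P2a P2b d0a d0b dSa dSb K0M KS0 E0 Dexp. exact H.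
have Hint : (\int[(@lebesgue_measure R \x @lebesgue_measure R)%E]_(z in region1 pt pg r beta x n)
     (integrand1 pt pg r beta x n z)%:E <= (C / m)%:E)%E.
  rewrite integral_mkcond.
  apply: (le_trans (@le_int_nm _ _ _ ((@lebesgue_measure R \x @lebesgue_measure R)%E) _ _ (@GG_ge0 R T c ph c0 ph0) Hpt1)).
  rewrite int_GG // -esum_ser; last by move=> t; rewrite lee_fin.
  apply: (@le_trans _ _ (\esum_(t in [set: T]) ((C / m)%:E * (w t)%:E))%E).
    apply: le_esum => t _; rewrite -EFinM lee_fin /c.
    have -> : C / m * w t = C * w t * m^-1 by rewrite mulrAC.
    apply: ler_wpM2l; first by rewrite mulr_ge0 // ltW.
    by rewrite lef_pV2 ?posrE.
  rewrite esumZl ?wsum ?mule1 //; last by move=> t; rewrite lee_fin ltW.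
  by rewrite divr_ge0 // ltW.
have e1 : expR (- nn) <= 2^-1.
  have h1 : expR (- nn) <= expR (-1) by rewrite ler_expR lerN2.
  apply: (le_trans h1); rewrite expRN lef_pV2 ?posrE ?expR_gt0 //.
  by have := expR_ge1Dx (1 : R); lra.
have k0 : 0 < 1 - expR (- nn).
  have : 0 < (2^-1 : R) by rewrite invr_gt0.
  have : (2^-1 : R) < 1 by rewrite invf_lt1 //; lra.
  lra.
have k2 : (1 - expR (- nn))^-1 <= 2.
  rewrite -[X in X <= _]div1r ler_pdivrMr //.
  have : (2^-1 : R) * 2 = 1 by rewrite mulVf.
  lra.
rewrite /I1.
apply: (le_trans (lee_wpmul2l _ Hint)).
  by rewrite lee_fin ltW // invr_gt0.
rewrite -EFinM lee_fin.
have -> : 4 / nn ^+ 2 * (M / m) = 2 * (C / m).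
  rewrite /C; field.
  by apply/andP; split; [exact: lt0r_neq0 | exact: lt0r_neq0].
apply: ler_wpM2r => //.
by rewrite divr_ge0 // ltW.
Qed.
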